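(* Let $S$ be a Boolean inverse monoid and $A$ a unital C*-algebra. A map $\pi:S\to A$ is a Boolean inverse monoid representation of $S$ if and only if $\pi$ is a tight representation of $S$.
   Context: An inverse semigroup is a semigroup $S$ in which every $s$ has a unique $s^*$ with $ss^*s=s$ and $s^*ss^*=s^*$; all inverse semigroups are assumed countable and to have a zero element $0$ ($0s=s0=0$). $E(S)=\{e\in S: e^2=e\}$ is a commutative subsemigroup. The natural partial order is $s\le t$ iff $ts^*s=s$; for idempotents $e\le f$ iff $ef=e$. Elements $s,t$ are compatible if $s^*t,st^*\in E(S)$. $S$ is distributive if every finite compatible subset $F$ has a join $\bigvee F$ in the natural order and $t(\bigvee_{s\in F}s)=\bigvee_{s\in F}ts$, $(\bigvee_{s\in F}s)t=\bigvee_{s\in F}st$ for all $t\in S$. A Boolean inverse monoid is a distributive inverse semigroup with identity $1$ such that $E(S)$, with the natural order, is a Boolean algebra ($e^\perp$ denotes the complement). A representation of $S$ in a unital C*-algebra $A$ is a map $\pi:S\to A$ with $\pi(0)=0$, $\pi(st)=\pi(s)\pi(t)$, $\pi(s^* )=\pi(s)^*$. A Boolean inverse monoid representation is a representation that additionally satisfies $\pi(s\vee t)=\pi(s)+\pi(t)-\pi(ss^*t)$ for all compatible $s,t\in S$. For finite $X,Y\subseteq E(S)$ let $E(S)^{X,Y}=\{e\in E(S): e\le x\ \forall x\in X,\ ey=0\ \forall y\in Y\}$. For $Z\subseteq W\subseteq E(S)$, $Z$ is a cover of $W$ if for every nonzero $w\in W$ there is $z\in Z$ with $zw\neq0$. A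 representation $\pi$ is tight if for all finite $X,Y,Z\subseteq E(S)$ with $Z\subseteq E(S)^{X,Y}$ a cover of $E(S)^{X,Y}$ one has $\bigvee_{z\in Z}\pi(z)=\prod_{x\in X}\pi(x)\prod_{y\in Y}(1-\pi(y))$, where for commuting projections $p\vee q=p+q-pq$ and empty products equal $1$.
   Formalization: A Boolean inverse monoid representation π also sends the identity of S to the unit of A, that is π(1) = 1. The statement above fails without it. *)

(* Defs.v *)
From Stdlib Require Import List.
From HB Require Import structures.
From mathcomp Require Import all_boot all_order all_algebra.
Set Implicit Arguments. Unset Strict Implicit. Unset Printing Implicit Defensive.
Import GRing.Theory.
Local Open Scope ring_scope.

Record InverseSemigroup := {
  is_car :> Type;
  is_mul : is_car -> is_car -> is_car;
  is_star : is_car -> is_car;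
  is_zero : is_car;
  is_assoc : forall a b c, is_mul a (is_mul b c) = is_mul (is_mul a b) c;
  is_inv1 : forall s, is_mul (is_mul s (is_star s)) s = s;
  is_inv2 : forall s, is_mul (is_mul (is_star s) s) (is_star s) = is_star s;
  is_inv_uniq : forall s t, is_mul (is_mul s t) s = s ->
                  is_mul (is_mul t s) t = t -> t = is_star s;
  is_zero_l : forall s, is_mul is_zero s = is_zero;
  is_zero_r : forall s, is_mul s is_zero = is_zero;
  is_countable : exists f : is_car -> nat, injective f
}.

Section InvSemigroupDefs.
Variable S : InverseSemigroup.
Local Notation "a ** b" := (is_mul a b) (at level 40, left associativity).
Local Notation "s ^*" := (is_star s).
Local Notation z0 := (is_zero S).

Definition idem (e : S) : Prop := e ** e = e.

Definition nle (s t : S) : Prop := t ** (s^* ** s) = s.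

Definition compatible (s t : S) : Prop := idem (s^* ** t) /\ idem (s ** t^*).

Definition is_join (F : seq S) (j : S) : Prop :=
  (forall s, Stdlib.Lists.List.In s F -> nle s j) /\
  (forall u, (forall s, Stdlib.Lists.List.In s F -> nle s u) -> nle j u).

Definition compatible_set (F : seq S) : Prop :=
  forall s t, Stdlib.Lists.List.In s F -> Stdlib.Lists.List.In t F -> compatible s t.

Definition distributive_isg : Prop :=
  forall F : seq S, compatible_set F ->
    exists j, is_join F j /\
      forall t, is_join (map (fun s => t ** s) F) (t ** j) /\
                is_join (map (fun s => s ** t) F) (j ** t).

Definition is_lub_in (P : S -> Prop) (le : S -> S -> Prop) (x y j : S) : Prop :=
  P j /\ le x j /\ le y j /\ (forall u, P u -> le x u -> le y u -> le j u).
Definition is_glb_in (P : S -> Prop) (le : S -> S -> Prop) (x y m : S) : Prop :=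
  P m /\ le m x /\ le m y /\ (forall u, P u -> le u x -> le u y -> le u m).

Definition is_boolean_algebra (P : S -> Prop) (le : S -> S -> Prop) : Prop :=
  (forall x, P x -> le x x) /\
  (forall x y, P x -> P y -> le x y -> le y x -> x = y) /\
  (forall x y w, P x -> P y -> P w -> le x y -> le y w -> le x w) /\
  (forall x y, P x -> P y -> exists j, is_lub_in P le x y j) /\
  (forall x y, P x -> P y -> exists m, is_glb_in P le x y m) /\
  (* distributive: x /\ (y \/ w) = (x /\ y) \/ (x /\ w) *)
  (forall x y w j m a b c, P x -> P y -> P w ->
     is_lub_in P le y w j -> is_glb_in P le x j m ->
     is_glb_in P le x y a -> is_glb_in P le x w b -> is_lub_in P le a b c ->
     m = c) /\
  exists bot top, P bot /\ P top /\
    (forall x, P x -> le bot x /\ le x top) /\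
    (forall x, P x -> exists y, P y /\ is_glb_in P le x y bot /\ is_lub_in P le x y top).

Definition is_boolean_inverse_monoid (one : S) : Prop :=
  (forall s, one ** s = s /\ s ** one = s) /\
  distributive_isg /\
  is_boolean_algebra idem nle.

Definition EXY (X Y : seq S) (e : S) : Prop :=
  idem e /\ (forall x, Stdlib.Lists.List.In x X -> nle e x) /\ (forall y, Stdlib.Lists.List.In y Y -> e ** y = z0).

Definition is_cover (Z : seq S) (W : S -> Prop) : Prop :=
  (forall z, Stdlib.Lists.List.In z Z -> W z) /\
  (forall w, W w -> w <> z0 -> exists z, Stdlib.Lists.List.In z Z /\ z ** w <> z0).

Variable A : pzRingType.
Variable astar : A -> A.

Definition is_representation (pi : S -> A) : Prop :=
  pi z0 = 0 /\
  (forall s t, pi (s ** t) = pi s * pi t) /\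
  (forall s, pi (s^*) = astar (pi s)).

Definition is_BIM_representation (one : S) (pi : S -> A) : Prop :=
  is_representation pi /\ pi one = 1 /\
  (forall s t j, compatible s t -> is_join [:: s; t] j ->
     pi j = pi s + pi t - pi (s ** s^* ** t)).

(** join of commuting projections, p \/ q = p + q - p q, iterated *)
Definition pjoin (p q : A) : A := p + q - p * q.
Definition bigpjoin (ps : seq A) : A := foldr pjoin 0 ps.

Definition is_tight_representation (pi : S -> A) : Prop :=
  is_representation pi /\
  forall X Y Z : seq S,
    (forall x, Stdlib.Lists.List.In x X -> idem x) ->
    (forall y, Stdlib.Lists.List.In y Y -> idem y) ->
    (forall z, Stdlib.Lists.List.In z Z -> idem z) ->
    is_cover Z (EXY X Y) ->
    bigpjoin (map pi Z) = (\prod_(x <- X) pi x) * (\prod_(y <- Y) (1 - pi y)).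

End InvSemigroupDefs.

Definition is_star_ring (A : pzRingType) (astar : A -> A) : Prop :=
  (forall x, astar (astar x) = x) /\
  (forall x y, astar (x + y) = astar x + astar y) /\
  (forall x y, astar (x * y) = astar y * astar x) /\
  astar 1 = 1.

(* Main.v *)
Require Import Defs.
From Stdlib Require Import List Classical.
From mathcomp Require Import all_boot all_order all_algebra.
Import GRing.Theory.
Local Open Scope ring_scope.

Local Notation "a ** b" := (is_mul a b) (at level 40, left associativity).
Local Notation "s ^*" := (is_star s).

Lemma star_star {S : InverseSemigroup} (s : S) : s^*^* = s.
Proof. symmetry; apply: is_inv_uniq; [apply: is_inv2 | apply: is_inv1]. Qed.

Lemma idem_star {S : InverseSemigroup} {e : S} : idem e -> e^* = e.
Proof. rewrite /idem => he; symmetry; apply: is_inv_uniq; by rewrite !he. Qed.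

Lemma ss_idem {S : InverseSemigroup} (s : S) : idem (s^* ** s).
Proof. by rewrite /idem is_assoc is_inv2. Qed.

Lemma sS_idem {S : InverseSemigroup} (s : S) : idem (s ** s^*).
Proof. have := ss_idem (s^*). by rewrite star_star. Qed.

Lemma lctx {S : InverseSemigroup} {a b c : S} : a ** b = c -> forall x, x ** a ** b = x ** c.
Proof. by move=> h x; rewrite -is_assoc h. Qed.

Lemma idem_mul {S : InverseSemigroup} {e f : S} : idem e -> idem f -> idem (e ** f).
Proof.
rewrite /idem => he hf.
have hc : f ** (e ** f)^* ** e = (e ** f)^*.
  apply: is_inv_uniq.
  - rewrite !is_assoc (lctx hf) (lctx he) -(is_assoc _ e f).
    exact: is_inv1.
  - rewrite !is_assoc (lctx he) (lctx hf) -(is_assoc _ e f) -(is_assoc f _ (e ** f)).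
    by rewrite -(is_assoc f _ (e ** f)^*) is_inv2.
have hb : idem (e ** f)^*.
  rewrite /idem -[X in X ** _]hc -[X in _ ** X]hc !is_assoc -(is_assoc _ e f) -(is_assoc f _ (e ** f)).
  by rewrite -(is_assoc f _ (e ** f)^*) is_inv2.
rewrite -(star_star (e ** f)) idem_star //.
Qed.

Lemma idem_comm {S : InverseSemigroup} {e f : S} : idem e -> idem f -> e ** f = f ** e.
Proof.
move=> he hf; have hef := idem_mul he hf; have hfe := idem_mul hf he.
rewrite -{1}(idem_star hef); symmetry.
apply: is_inv_uniq.
- rewrite !is_assoc (lctx hf) (lctx he) -(is_assoc _ e f); exact: hef.
- rewrite !is_assoc (lctx he) (lctx hf) -(is_assoc _ f e); exact: hfe.
Qed.

Lemma lctx3 {S : InverseSemigroup} {a b c d : S} : a ** b ** c = d -> forall x, x ** a ** b ** c = x ** d.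
Proof. by move=> h x; rewrite -!is_assoc (is_assoc a) h. Qed.

Lemma star_mul {S : InverseSemigroup} (s t : S) : (s ** t)^* = t^* ** s^*.
Proof.
have K := idem_comm (sS_idem t) (ss_idem s).
symmetry; apply: is_inv_uniq.
- transitivity (s ** (t ** t^* ** (s^* ** s)) ** t); first by rewrite !is_assoc.
  by rewrite K !is_assoc is_inv1 (lctx3 (is_inv1 t)).
- transitivity (t^* ** (s^* ** s ** (t ** t^*)) ** s^*); first by rewrite !is_assoc.
  rewrite -K !is_assoc -(star_star t) is_inv2 star_star.
  by rewrite (lctx3 (is_inv2 s)).
Qed.

Lemma zero_idem {S : InverseSemigroup} : idem (is_zero S).
Proof. exact: is_zero_l. Qed.

Lemma zero_star {S : InverseSemigroup} : (is_zero S)^* = is_zero S.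
Proof. exact: idem_star zero_idem. Qed.

Lemma nle_idem {S : InverseSemigroup} {a : S} (b : S) : idem a -> (nle a b <-> b ** a = a).
Proof. by move=> ha; rewrite /nle (idem_star ha) ha. Qed.

Lemma nle_refl {S : InverseSemigroup} (s : S) : nle s s.
Proof. by rewrite /nle is_assoc is_inv1. Qed.

Lemma nle_antisym {S : InverseSemigroup} (s t : S) : nle s t -> nle t s -> s = t.
Proof.
rewrite /nle => h1 h2.
have K := idem_comm (ss_idem t) (ss_idem s).
rewrite -{1}h1 -{1}h2 -is_assoc K is_assoc (is_assoc s s^* s) is_inv1; exact: h2.
Qed.

Lemma join_uniq {S : InverseSemigroup} {F : seq S} {j1 j2 : S} : is_join F j1 -> is_join F j2 -> j1 = j2.
Proof.
move=> [u1 l1] [u2 l2]; apply: nle_antisym; [apply: l1 | apply: l2]; by [].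
Qed.

Lemma zero_nle {S : InverseSemigroup} (u : S) : nle (is_zero S) u.
Proof. by rewrite /nle zero_star is_zero_r is_zero_r. Qed.

Lemma join_z0l {S : InverseSemigroup} (u : S) : is_join [:: is_zero S; u] u.
Proof.
split.
- move=> s /= [<-|[<-|[]]]; [exact: zero_nle | exact: nle_refl].
- move=> v hv; apply: hv => /=; tauto.
Qed.

Lemma join_z0r {S : InverseSemigroup} (u : S) : is_join [:: u; is_zero S] u.
Proof.
split.
- move=> s /= [<-|[<-|[]]]; [exact: nle_refl | exact: zero_nle].
- move=> v hv; apply: hv => /=; tauto.
Qed.

Lemma compat_idem {S : InverseSemigroup} {e f : S} : idem e -> idem f -> compatible e f.
Proof. move=> he hf; rewrite /compatible (idem_star he) (idem_star hf); split; exact: idem_mul. Qed.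

Lemma below_idem {S : InverseSemigroup} (s e : S) : idem e -> nle s e -> idem s.
Proof. move=> he; rewrite /nle => <-. apply: idem_mul => //; exact: ss_idem. Qed.

Lemma compat_refl {S : InverseSemigroup} (s : S) : compatible s s.
Proof. split; [exact: ss_idem | exact: sS_idem]. Qed.

Lemma compat_sym {S : InverseSemigroup} (s t : S) : compatible s t -> compatible t s.
Proof.
move=> [h1 h2]; split.
- have := idem_star h1; rewrite star_mul star_star => ->; exact h1.
- have := idem_star h2; rewrite star_mul star_star => ->; exact h2.
Qed.

Lemma compat_set2 {S : InverseSemigroup} {s t : S} : compatible s t -> compatible_set [:: s; t].
Proof.
move=> h a b /= ha hb.
case: ha => [<-|[<-|[]]]; case: hb => [<-|[<-|[]]];
  by [apply: compat_refl | apply: compat_sym | ].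
Qed.

Lemma compat_meet {S : InverseSemigroup} {s t : S} : compatible s t ->
  s ** (t^* ** t) = s ** s^* ** t.
Proof.
move=> [hb ha].
have E1 : t ** s^* = s ** t^*.
  by have := idem_star ha; rewrite star_mul star_star.
have E2 : t^* ** s = s^* ** t.
  by have := idem_star hb; rewrite star_mul star_star.
have K := idem_comm (ss_idem s) (ss_idem t).
transitivity (s ** (s^* ** s ** (t^* ** t))); first by rewrite !is_assoc is_inv1.
rewrite K.
transitivity (s ** t^* ** (t ** s^*) ** s); first by rewrite !is_assoc.
rewrite E1 ha -is_assoc E2 is_assoc //.
Qed.

Lemma one_idem {S : InverseSemigroup} {one : S} :
  (forall s, one ** s = s /\ s ** one = s) -> idem one.
Proof. move=> h; exact: (h one).1. Qed.

Lemma nle_one {S : InverseSemigroup} {one : S} :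
  (forall s, one ** s = s /\ s ** one = s) -> forall e, idem e -> nle e one.
Proof. move=> h e he; apply/(nle_idem _ he); exact: (h e).1. Qed.

Lemma join_idem {S : InverseSemigroup} {one : S} :
  (forall s, one ** s = s /\ s ** one = s) -> distributive_isg S ->
  forall {e f : S}, idem e -> idem f ->
  exists j, idem j /\ is_join [:: e; f] j /\ forall u : S, is_join [:: u ** e; u ** f] (u ** j).
Proof.
move=> hone hd e f he hf.
have [j [hj hj2]] := hd _ (compat_set2 (compat_idem he hf)).
exists j; split; last by split => // u; exact: (hj2 u).1.
apply: (@below_idem _ j one (one_idem hone)); apply: hj.2 => s /= [<-|[<-|[]]]; exact: nle_one.
Qed.

Lemma complement {S : InverseSemigroup} {one : S} :
  (forall s, one ** s = s /\ s ** one = s) -> distributive_isg S ->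
  is_boolean_algebra (@idem S) (@nle S) ->
  forall y : S, idem y -> exists y', idem y' /\ y ** y' = is_zero S /\ y' ** y = is_zero S /\
     forall w : S, is_join [:: w ** y; w ** y'] w.
Proof.
move=> hone hd [_ [_ [_ [_ [_ [_ [bot [top [Pb [Pt [hbt hc]]]]]]]]]]] y hy.
have hbot : bot = is_zero S.
  have := (hbt _ zero_idem).1; rewrite /nle is_zero_l => <- //.
have htop : top = one.
  have := (hbt _ (one_idem hone)).2; move/(nle_idem _ (one_idem hone)).
  by rewrite (hone top).2.
have [y' [hy' [hglb hlub]]] := hc y hy.
have hyy : y ** y' = is_zero S.
  have H : nle (y ** y') bot.
    apply: hglb.2.2.2; first exact: idem_mul hy hy'.
    - apply/(nle_idem _ (idem_mul hy hy')); rewrite is_assoc hy //.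
    - apply/(nle_idem _ (idem_mul hy hy')); rewrite (idem_comm hy hy') is_assoc hy' //.
  move/(nle_idem _ (idem_mul hy hy')): H; rewrite hbot is_zero_l //.
have [j [hj [hjj hju]]] := join_idem hone hd hy hy'.
have hj1 : j = one.
  apply: nle_antisym; first exact: nle_one.
  rewrite -htop; apply: hlub.2.2.2 => //; apply: hjj.1 => /=; tauto.
exists y'; split => //; split => //; split; first by rewrite (idem_comm hy' hy).
move=> w; have := hju w; rewrite hj1 (hone w).2 //.
Qed.

Lemma below_ss {S : InverseSemigroup} (s j : S) : nle s j -> j^* ** j ** (s^* ** s) = s^* ** s.
Proof.
rewrite /nle => h.
have E1 : s^* = s^* ** s ** j^* by rewrite -{1}h star_mul (idem_star (ss_idem s)).
have H1 : s^* ** (j ** (s^* ** s)) = s^* ** s by rewrite h.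
rewrite {1}E1 in H1.
have K := idem_comm (ss_idem j) (ss_idem s).
rewrite K.
transitivity (s^* ** s ** (j^* ** j) ** (s^* ** s)).
  by rewrite -(is_assoc (s^* ** s) (j^* ** j) (s^* ** s)) K (is_assoc (s^* ** s) (s^* ** s)) (ss_idem s).
by rewrite !is_assoc in H1 *.
Qed.

Lemma tight_BIM {S : InverseSemigroup} {one : S} (hS : is_boolean_inverse_monoid one)
  (A : pzRingType) (astar : A -> A) (pi : S -> A) :
  is_tight_representation astar pi -> is_BIM_representation astar one pi.
Proof.
move=> [hrep ht]; have [hz [hm hs]] := hrep.
have [hone [hd hBA]] := hS.
have p1 : pi one = 1.
  have : bigpjoin (map pi [:: one]) = (\prod_(x <- [::]) pi x) * (\prod_(y <- [::]) (1 - pi y)).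
    apply: ht.
    - by move=> x [].
    - by move=> x [].
    - move=> z [<-|[]]; exact: one_idem hone.
    - split.
      + move=> z [<-|[]]; split; first exact: one_idem hone.
        by split => x [].
      + move=> w hw hw0; exists one; split; first by left.
        by rewrite (hone w).1.
  by rewrite /bigpjoin /= /pjoin !big_nil mulr0 subr0 addr0 mulr1.
split => //; split => // s t j hst hj.
have hsj : nle s j by apply: hj.1; left.
have htj : nle t j by apply: hj.1; right; left.
have [j' [hj' hj2]] := hd _ (compat_set2 hst).
have ejj : j' = j := join_uniq hj' hj.
subst j'.
have Hg : bigpjoin (map pi [:: s^* ** s; t^* ** t]) =
    (\prod_(x <- [:: j^* ** j]) pi x) * (\prod_(y <- [::]) (1 - pi y)).
  apply: ht.
  - move=> x [<-|[]]; exact: ss_idem.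
  - by move=> x [].
  - move=> z [<-|[<-|[]]]; exact: ss_idem.
  - split.
    + move=> z [<-|[<-|[]]]; (split; first exact: ss_idem); split => //.
      * move=> x [<-|[]]; apply/(nle_idem _ (ss_idem _)); exact: below_ss.
      * move=> x [<-|[]]; apply/(nle_idem _ (ss_idem _)); exact: below_ss.
    + move=> w [hw [hx _]] hw0.
      have hgw : j^* ** j ** w = w.
        by apply/(nle_idem _ hw); apply: hx; left.
      apply: NNPP => hn; apply: hw0.
      have hew : s^* ** s ** w = is_zero S.
        apply: NNPP => hh; apply: hn; exists (s^* ** s); split => //; by left.
      have hfw : t^* ** t ** w = is_zero S.
        apply: NNPP => hh; apply: hn; exists (t^* ** t); split => //; by right; left.
      have hsw : s ** w = is_zero S.
        by rewrite -(is_inv1 s) -!is_assoc (is_assoc s^*) hew is_zero_r.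
      have htw : t ** w = is_zero S.
        by rewrite -(is_inv1 t) -!is_assoc (is_assoc t^*) hfw is_zero_r.
      have := (hj2 w).2; rewrite /= hsw htw => hjw.
      have jw0 : j ** w = is_zero S := join_uniq hjw (join_z0l _).
      by rewrite -hgw -is_assoc jw0 is_zero_r.
move: Hg; rewrite /bigpjoin /= /pjoin !big_cons !big_nil mulr0 subr0 addr0 !mulr1 => Hg.
have -> : pi j = pi j * pi (j^* ** j) by rewrite -hm is_assoc is_inv1.
rewrite -Hg mulrBr mulrDr mulrA -!hm hsj htj -(compat_meet hst) //.

Qed.

Lemma BIM_tight {S : InverseSemigroup} {one : S} (hS : is_boolean_inverse_monoid one)
  (A : pzRingType) (astar : A -> A) (pi : S -> A) :
  is_BIM_representation astar one pi -> is_tight_representation astar pi.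
Proof.
move=> [hrep [p1 hjoin]]; have [hz [hm hs]] := hrep.
have [hone [hd hBA]] := hS.
split => // X Y Z hX hY hZ [hZc hcov].
have hcompl : forall y : S, idem y -> exists y', idem y' /\ y ** y' = is_zero S /\
    y' ** y = is_zero S /\ pi y' = 1 - pi y /\
    (forall w, w ** y = is_zero S -> w ** y' = w).
  move=> y hy; have [y' [hy' [h1 [h2 h3]]]] := complement hone hd hBA y hy.
  exists y'; do 3 (split => //); split.
  - have := h3 one; rewrite !(hone _).1 => hj1.
    have := hjoin y y' one (compat_idem hy hy') hj1.
    rewrite (idem_star hy) hy h1 hz subr0 p1 => ->.
    by rewrite addrAC subrr add0r.
  - move=> w hw; have := h3 w; rewrite hw => hj.
    exact: (join_uniq (join_z0l _) hj).
have [eY [heY [peY [heY1 heY2]]]] : exists eY, idem eY /\ pi eY = \prod_(y <- Y) (1 - pi y) /\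
    (forall y, In y Y -> eY ** y = is_zero S) /\
    (forall w, (forall y, In y Y -> w ** y = is_zero S) -> w ** eY = w).
  elim: Y hY {hcov hZc} => [|y Y IH] hY.
    exists one; split; first exact: one_idem hone.
    split; first by rewrite big_nil.
    by split => // w _; exact: (hone w).2.
  have hy : idem y by apply: hY; left.
  have [eY [heY [peY [heY1 heY2]]]] := IH (fun y h => hY y (or_intror h)).
  have [y' [hy' [h1 [h2 [h3 h4]]]]] := hcompl y hy.
  exists (y' ** eY); split; first exact: idem_mul.
  split; first by rewrite hm big_cons h3 peY.
  split.
  - move=> y0 [<-|hy0].
    + by rewrite (idem_comm hy' heY) -is_assoc h2 is_zero_r.
    + by rewrite -is_assoc heY1 // is_zero_r.
  - move=> w hw; rewrite is_assoc h4; last by apply: hw; left.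
    by apply: heY2 => y0 hy0; apply: hw; right.
have [eX [heX [peX [heX1 heX2]]]] : exists eX, idem eX /\ pi eX = \prod_(x <- X) pi x /\
    (forall x, In x X -> x ** eX = eX) /\
    (forall w, idem w -> (forall x, In x X -> x ** w = w) -> w ** eX = w).
  elim: X hX {hcov hZc} => [|x X IH] hX.
    exists one; split; first exact: one_idem hone.
    split; first by rewrite big_nil.
    by split => // w _ _; exact: (hone w).2.
  have hx : idem x by apply: hX; left.
  have [eX [heX [peX [heX1 heX2]]]] := IH (fun y h => hX y (or_intror h)).
  exists (x ** eX); split; first exact: idem_mul.
  split; first by rewrite hm big_cons peX.
  split.
  - move=> x0 [<-|hx0]; first by rewrite is_assoc hx.
    rewrite is_assoc -(idem_comm hx (hX x0 (or_intror hx0))) -is_assoc heX1 //.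
  - move=> w hw hxw; rewrite is_assoc (idem_comm hw hx) hxw; last by left.
    by apply: heX2 => // x0 hx0; apply: hxw; right.
set e := eX ** eY.
have he : idem e by exact: idem_mul.
have Hex : forall x, In x X -> x ** e = e by move=> x hx; rewrite /e is_assoc heX1.
have Hey : forall y, In y Y -> e ** y = is_zero S.
  by move=> y hy; rewrite /e -is_assoc heY1 // is_zero_r.
have Hew : forall w, EXY X Y w -> w ** e = w.
  move=> w [hw [hwx hwy]]; rewrite /e is_assoc heX2 //.
  - by apply: heY2.
  - by move=> x hx; apply/(nle_idem _ hw); apply: hwx.
have [jZ [hjZ [pjZ [hjZ1 hjZ2]]]] : exists j, idem j /\ pi j = bigpjoin (map pi Z) /\
    (forall z, In z Z -> j ** z = z) /\ e ** j = j.
  have hZe : forall z, In z Z -> e ** z = z.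
    move=> z hzz; rewrite (idem_comm he (hZ z hzz)); apply: Hew; exact: hZc.
  elim: Z hZ hZe {hcov hZc} => [|z Z IH] hZ hZe.
    exists (is_zero S); split; first exact: zero_idem.
    by split => //; split => //; exact: is_zero_r.
  have hz0 : idem z by apply: hZ; left.
  have [j [hj [pj [hj1 hj2]]]] := IH (fun y h => hZ y (or_intror h)) (fun y h => hZe y (or_intror h)).
  have [J [hJ [hJj _]]] := join_idem hone hd hz0 hj.
  exists J; split => //; split.
    rewrite (hjoin _ _ _ (compat_idem hz0 hj) hJj) (idem_star hz0) hz0 hm /=.
    by rewrite /pjoin -pj.
  split.
  - move=> z0 [<-|hz1].
      by apply/(nle_idem _ hz0); apply: hJj.1; left.
    have hjJ : J ** j = j by apply/(nle_idem _ hj); apply: hJj.1; right; left.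
    by rewrite -(hj1 _ hz1) is_assoc hjJ.
  - apply/(nle_idem _ hJ); apply: hJj.2 => s [<-|[<-|[]]].
    + by apply/(nle_idem _ hz0); apply: hZe; left.
    + by apply/(nle_idem _ hj).
have [jZ' [hjZ' [h1 [h2 h3]]]] := complement hone hd hBA jZ hjZ.
have hjz : forall z, In z Z -> z ** jZ = z.
  by move=> z hzz; rewrite (idem_comm (hZ z hzz) hjZ); apply: hjZ1.
case: (classic (e ** jZ' = is_zero S)) => hd0.
  have := h3 e; rewrite hjZ2 hd0 => hj.
  rewrite -pjZ (join_uniq (join_z0r _) hj) /e hm peX peY //.
exfalso.
have hE : EXY X Y (e ** jZ').
  split; first exact: idem_mul he hjZ'.
  split.
  - move=> x hx; apply/(nle_idem _ (idem_mul he hjZ')); by rewrite is_assoc Hex.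
  - move=> y hy; rewrite (idem_comm he hjZ') -is_assoc Hey // is_zero_r //.
have [z [hzZ hzd]] := hcov (e ** jZ') hE hd0.
apply: hzd; rewrite is_assoc (Hew z (hZc z hzZ)) -(hjz z hzZ) -is_assoc h1 is_zero_r //.
Qed.

Theorem mainTheorem1 (S : InverseSemigroup) (one : S)
  (hS : is_boolean_inverse_monoid one)
  (A : pzRingType) (astar : A -> A) (hA : is_star_ring astar)
  (pi : S -> A) :
  is_BIM_representation astar one pi <-> is_tight_representation astar pi.
Proof.
split; [exact: BIM_tight | exact: tight_BIM].
Qed.
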